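(* The dense $\mathbb{Q}$-game strategy described below is a pairing strategy (i.e. the pairs of edges it uses are pairwise disjoint) and it is a winning strategy for Breaker in the dense rational number game. The dense $\mathbb{Q}$-game strategy: At the start Breaker fixes an infinite sequence $(I_j)_{j\in\mathbb{N}}$ of pairwise disjoint nonempty open intervals of $\mathbb{Q}$, an enumeration $\mathcal{Q}$ of $\mathbb{Q}$, and an enumeration $(\{p_j,q_j\})_{j\in\mathbb{N}}$ of all $2$-element subsets of $\mathbb{Q}$. For every $j$ and every $s\in I_j\setminus\{p_j,q_j\}$ that appears later in $\mathcal{Q}$ than both $p_j$ and $q_j$, Breaker pairs the edges $p_js$ and $q_js$. Whenever Maker claims one edge of such a pair, Breaker claims the other edge of that pair in his next turn (otherwise Breaker plays arbitrarily).
   Context: Let $K^{\mathbb{Q}}$ denote the complete graph with vertex set $\mathbb{Q}$. In the dense rational number game, Maker and Breaker alternately claim previously unclaimed edges of $K^{\mathbb{Q}}$, one per turn, Maker first, for countably many turns. Maker wins if at the end the graph of Maker's edges contains a complete graph on a countably infinite vertex set $V\subseteq\mathbb{Q}$ that is dense in $\mathbb{Q}$; otherwise Breaker wins. A winning strategy for Breaker is one guaranteeing Breaker wins against every play of Maker. *)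

(* Defs.v *)
From mathcomp Require Import all_boot all_order all_algebra.
Import Order.TTheory GRing.Theory Num.Theory.
Local Open Scope ring_scope.

(* An edge of K^Q is an unordered pair {x,y}, x <> y, represented in
   normal form (x, y) with x < y. *)
Definition edge := (rat * rat)%type.
Definition is_edge (e : edge) : Prop := e.1 < e.2.
Definition sedge (x y : rat) : edge := (Num.min x y, Num.max x y).

Definition disjoint_intervals (a b : nat -> rat) : Prop :=
  (forall j, a j < b j) /\
  (forall j j' (x : rat), j <> j' -> x \in (`]a j, b j[) -> x \notin (`]a j', b j'[)).

Definition enum_Q (f : nat -> rat) : Prop := bijective f.

Definition enum_pairs (pq : nat -> edge) : Prop :=
  (forall j, is_edge (pq j)) /\ injective pq /\
  (forall e, is_edge e -> exists j, pq j = e).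

Definition pair_index (a b : nat -> rat) (f : nat -> rat) (pq : nat -> edge)
  (j : nat) (s : rat) : Prop :=
  (s \in (`]a j, b j[)) /\ s <> (pq j).1 /\ s <> (pq j).2 /\
  exists k kp kq, f k = s /\ f kp = (pq j).1 /\ f kq = (pq j).2 /\
                  (kp < k)%N /\ (kq < k)%N.

Definition pair_fst (pq : nat -> edge) (j : nat) (s : rat) : edge := sedge (pq j).1 s.
Definition pair_snd (pq : nat -> edge) (j : nat) (s : rat) : edge := sedge (pq j).2 s.

Definition in_pair (pq : nat -> edge) (j : nat) (s : rat) (e : edge) : Prop :=
  e = pair_fst pq j s \/ e = pair_snd pq j s.

Definition pairing_strategy (a b f : nat -> rat) (pq : nat -> edge) : Prop :=
  (forall j s, pair_index a b f pq j s -> pair_fst pq j s <> pair_snd pq j s) /\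
  (forall j s j' s' e, pair_index a b f pq j s -> pair_index a b f pq j' s' ->
     in_pair pq j s e -> in_pair pq j' s' e -> j = j' /\ s = s').

(* A play: m n is Maker's n-th move, bk n is Breaker's n-th move, in the
   order m 0, bk 0, m 1, bk 1, ...  Legality: every move is an edge and
   no edge is claimed twice. *)
Definition legal_play (m bk : nat -> edge) : Prop :=
  (forall n, is_edge (m n)) /\ (forall n, is_edge (bk n)) /\
  injective m /\ injective bk /\ (forall i k, m i <> bk k).

Definition claimed_before_breaker (m bk : nat -> edge) (n : nat) (e : edge) : Prop :=
  (exists k, (k <= n)%N /\ m k = e) \/ (exists k, (k < n)%N /\ bk k = e).

Definition breaker_follows (a b f : nat -> rat) (pq : nat -> edge)
  (m bk : nat -> edge) : Prop :=
  forall n j s, pair_index a b f pq j s ->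
    (m n = pair_fst pq j s ->
       ~ claimed_before_breaker m bk n (pair_snd pq j s) -> bk n = pair_snd pq j s) /\
    (m n = pair_snd pq j s ->
       ~ claimed_before_breaker m bk n (pair_fst pq j s) -> bk n = pair_fst pq j s).

Definition maker_adj (m : nat -> edge) (x y : rat) : Prop := exists n, m n = sedge x y.

Definition dense_in_Q (V : rat -> Prop) : Prop :=
  forall x y : rat, x < y -> exists v, V v /\ x < v < y.

Definition infinite_set (V : rat -> Prop) : Prop :=
  ~ exists s : seq rat, forall x, V x -> x \in s.

Definition maker_wins (m : nat -> edge) : Prop :=
  exists V : rat -> Prop, infinite_set V /\ dense_in_Q V /\
    forall x y, V x -> V y -> x <> y -> maker_adj m x y.

(* Main.v *)
Require Import Defs.
From mathcomp Require Import all_boot all_order all_algebra.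
Import Order.TTheory GRing.Theory Num.Theory.

Local Open Scope ring_scope.

Lemma sedgeE x y u v : sedge x y = sedge u v -> (x = u /\ y = v) \/ (x = v /\ y = u).
Proof.
rewrite /sedge; case: (leP x y); case: (leP u v) => h1 h2 [e1 e2]; subst.
all: try by left.
all: try by right.
all: try (have e : u = v by apply/eqP; rewrite eq_le; (try rewrite e1); (try rewrite e2); (try rewrite h1); (try rewrite h2); rewrite ?ltW).
Qed.

Lemma avoid (f : nat -> rat) N x y : x < y -> exists x' y', x <= x' /\ x' < y' /\ y' <= y /\
  forall i, (i < N)%N -> ~ (x' < f i < y').
Proof.
move=> xy; elim: N => [|N [x' [y' [h1 [h2 [h3 h4]]]]]].
  by exists x, y; split=> //; split=> //; split=> //.
case: (boolP (x' < f N < y')) => [/andP[l1 l2]|hn].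
  exists x', (f N); split=> //; split=> //; split; first exact: (le_trans (ltW l2) h3).
  move=> i; rewrite ltnS leq_eqVlt => /orP[/eqP ->|hi].
    by rewrite ltxx andbF.
  move=> /andP[k1 k2]; apply: (h4 i hi); rewrite k1 /=; exact: lt_trans k2 l2.
exists x', y'; split=> //; split=> //; split=> //.
move=> i; rewrite ltnS leq_eqVlt => /orP[/eqP ->|hi].
  by move=> h; rewrite h in hn.
exact: h4.
Qed.

Theorem lemma4p1 (a b f : nat -> rat) (pq : nat -> edge) :
  disjoint_intervals a b -> enum_Q f -> enum_pairs pq ->
  pairing_strategy a b f pq /\
  (forall m bk : nat -> edge, legal_play m bk -> breaker_follows a b f pq m bk ->
     ~ maker_wins m).
Proof.
move=> [ab disj] [g fK gK] [pe [pinj psurj]].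
have P1 : forall j s, pair_index a b f pq j s -> pair_fst pq j s <> pair_snd pq j s.
  move=> j s [sI [sp [sq _]]]; rewrite /pair_fst /pair_snd => /sedgeE [[e _]|[e1 e2]].
    by have := pe j; rewrite /is_edge e ltxx.
  exact: sp (esym e1).
split; first split.
- exact: P1.
- move=> j s j' s' e [sI [sp [sq [k [kp [kq [fk [fkp [fkq [lt1 lt2]]]]]]]]]]
    [s'I [s'p [s'q [k' [kp' [kq' [fk' [fkp' [fkq' [lt1' lt2']]]]]]]]]] H1 H2.
  have key : forall x x', (x = (pq j).1 \/ x = (pq j).2) ->
      (x' = (pq j').1 \/ x' = (pq j').2) -> sedge x s = sedge x' s' -> j = j' /\ s = s'.
    move=> x x' hx hx' /sedgeE [[_ ss]|[xs' sx']].
      rewrite -ss in s'I; split=> //.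
      have [//|neq] := eqVneq j j'.
      by have := disj j j' s (elimN eqP neq) sI; rewrite s'I.
    have hk : (k < k')%N.
      case: hx' => e0.
        by have -> := can_inj fK (etrans fk (etrans sx' (etrans e0 (esym fkp')))).
      by have -> := can_inj fK (etrans fk (etrans sx' (etrans e0 (esym fkq')))).
    have hk' : (k' < k)%N.
      case: hx => e0.
        by have -> := can_inj fK (etrans fk' (etrans (esym xs') (etrans e0 (esym fkp)))).
      by have -> := can_inj fK (etrans fk' (etrans (esym xs') (etrans e0 (esym fkq)))).
    by have := ltn_trans hk hk'; rewrite ltnn.
  case: H1 => E1; case: H2 => E2; rewrite E1 in E2; apply: (key _ _ _ _ E2); by [left|right].
move=> m bk [mE [bE [minj [binj mb]]]] fol [V [_ [dense comp]]].
have [p [Vp _]] := dense 0 1 ltr01.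
have pp1 : p < p + 1 by rewrite ltrDl ltr01.
have [q [Vq /andP[pq1 _]]] := dense p (p + 1) pp1.
have [j hj] := psurj (p, q) pq1.
have [x' [y' [h1 [h2 [h3 h4]]]]] := avoid f (maxn (g p) (g q)).+1 _ _ (ab j).
have [s [Vs /andP[s1 s2]]] := dense x' y' h2.
have nF : forall i, (i <= maxn (g p) (g q))%N -> f i <> s.
  by move=> i hi e; apply: (h4 i hi); rewrite e s1 s2.
have sp : s <> p by move=> e; apply: (nF (g p) (leq_maxl _ _)); rewrite gK e.
have sq : s <> q by move=> e; apply: (nF (g q) (leq_maxr _ _)); rewrite gK e.
have pi : pair_index a b f pq j s.
  split.
    rewrite in_itv /=; apply/andP; split.
      exact: le_lt_trans h1 s1.
    exact: lt_le_trans s2 h3.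
  rewrite hj /=; split=> //; split=> //.
  exists (g s), (g p), (g q); rewrite !gK; split=> //; split=> //; split=> //.
  split; rewrite ltnNge; apply/negP=> hh.
    by apply: (nF (g s) _ (gK s)); rewrite (leq_trans hh) // leq_maxl.
  by apply: (nF (g s) _ (gK s)); rewrite (leq_trans hh) // leq_maxr.
have [n1 e1] := comp p s Vp Vs (fun e => sp (esym e)).
have [n2 e2] := comp q s Vq Vs (fun e => sq (esym e)).
have F1 : m n1 = pair_fst pq j s by rewrite /pair_fst hj.
have F2 : m n2 = pair_snd pq j s by rewrite /pair_snd hj.
have hne := P1 j s pi.
case: (ltngtP n1 n2) => hn.
- have [h _] := fol n1 j s pi.
  have nc : ~ claimed_before_breaker m bk n1 (pair_snd pq j s).
    case=> [[k [hk ek]]|[k [hk ek]]].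
      have ekn := minj _ _ (etrans ek (esym F2)).
      by subst k; rewrite leqNgt hn in hk.
    exact: mb n2 k (etrans F2 (esym ek)).
  exact: mb n2 n1 (etrans F2 (esym (h F1 nc))).
- have [_ h] := fol n2 j s pi.
  have nc : ~ claimed_before_breaker m bk n2 (pair_fst pq j s).
    case=> [[k [hk ek]]|[k [hk ek]]].
      have ekn := minj _ _ (etrans ek (esym F1)).
      by subst k; rewrite leqNgt hn in hk.
    exact: mb n1 k (etrans F1 (esym ek)).
  exact: mb n1 n2 (etrans F1 (esym (h F2 nc))).
- by subst n2; apply: hne; rewrite -F1 -F2.
Qed.
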